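(* Let $F$ be a field, $4\le n<\infty$, and let $\varphi$ be an almost identity PC-map of $\mathrm{UT}(n,F)$. For $u=(u_1,\dots,u_{n-1})\in F^{n-1}$ (a row) put $a_u=\begin{pmatrix}1&u\\0&e_{n-1}\end{pmatrix}=e+\sum_{j=2}^{n}u_{j-1}e_{1j}$. Then there is a function $f:F^{n-1}\to F$ such that $\varphi(a_u)=a_u\,t_{1n}(f(u))$ for all $u$, and $f(u)=0$ whenever $u_1=u_2=0$.
   Context: $\mathrm{UT}(n,F)$ is the group of upper unitriangular $n\times n$ matrices over $F$; $e$ (or $e_m$) is the identity matrix, $e_{ij}$ the matrix unit, $t_{ij}(\alpha)=e+\alpha e_{ij}$ ($i<j$). $[x,y]=xyx^{-1}y^{-1}$. A PC-map is a bijection $\varphi$ of the group with $\varphi([x,y])=[\varphi(x),\varphi(y)]$ for all $x,y$; it is almost identity if $\varphi(t_{ij}(\alpha))=t_{ij}(\alpha)$ for all $i<j$, $\alpha\in F$. *)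

(* Defs.v *)
From HB Require Import structures.
From mathcomp Require Import all_boot all_order all_algebra.
Set Implicit Arguments. Unset Strict Implicit. Unset Printing Implicit Defensive.
Import GRing.Theory.
Local Open Scope ring_scope.

Definition unitri (F : fieldType) (n : nat) (x : 'M[F]_n) : Prop :=
  forall i j : 'I_n, ((j < i)%N -> x i j = 0) /\ (i = j -> x i j = 1).

Definition mxcomm (F : fieldType) (n : nat) (x y : 'M[F]_n) : 'M[F]_n :=
  x *m y *m invmx x *m invmx y.

Definition transv (F : fieldType) (n : nat) (i j : 'I_n) (a : F) : 'M[F]_n :=
  1%:M + a *: delta_mx i j.

(* PC-map of UT(n,F): phi restricted to UT(n,F) is a bijection of UT(n,F)
   preserving commutators (values of phi outside UT(n,F) are irrelevant) *)
Definition PCmap (F : fieldType) (n : nat) (phi : 'M[F]_n -> 'M[F]_n) : Prop :=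
  [/\ forall x, unitri x -> unitri (phi x),
      forall x y, unitri x -> unitri y -> phi x = phi y -> x = y,
      forall y, unitri y -> exists2 x, unitri x & phi x = y
    & forall x y, unitri x -> unitri y -> phi (mxcomm x y) = mxcomm (phi x) (phi y)].

Definition almost_identity (F : fieldType) (n : nat) (phi : 'M[F]_n -> 'M[F]_n) : Prop :=
  forall (i j : 'I_n) (a : F), (i < j)%N -> phi (transv i j a) = transv i j a.

Definition a_mx (F : fieldType) (m : nat) (u : 'rV[F]_m) : 'M[F]_(1 + m) :=
  block_mx 1%:M u 0 1%:M.

(* Main.v *)
Require Import Defs.
From HB Require Import structures.
From mathcomp Require Import all_boot all_order all_algebra.
Local Open Scope ring_scope.

From mathcomp Require Import ring.
Set Implicit Arguments. Unset Strict Implicit. Unset Printing Implicit Defensive.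
Import GRing.Theory.



Lemma mxdE (F : fieldType) m n p (A : 'M[F]_(m,n)) (i : 'I_n) (j : 'I_p) a b :
  (A *m delta_mx i j) a b = A a i * (b == j)%:R.
Proof.
rewrite mxE (bigD1 i) //= big1 ?addr0 => [|l /negPf hl]; rewrite !mxE ?hl ?eqxx //=.
by rewrite mulr0.
Qed.

Lemma dmxE (F : fieldType) m n p (A : 'M[F]_(n,p)) (i : 'I_m) (j : 'I_n) a b :
  (delta_mx i j *m A) a b = (a == i)%:R * A j b.
Proof.
rewrite mxE (bigD1 j) //= big1 ?addr0 => [|l /negPf hl]; rewrite !mxE ?hl ?eqxx ?andbT ?andbF //=.
by rewrite mul0r.
Qed.

Lemma inv_eq (F : fieldType) n (A B : 'M[F]_n) : A *m B = 1%:M -> invmx A = B.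
Proof.
move=> h; have [uA _] := mulmx1_unit h.
by rewrite -[invmx A]mulmx1 -h mulmxA mulVmx // mul1mx.
Qed.

Lemma unitri_unit (F : fieldType) n (x : 'M[F]_n) : unitri x -> x \in unitmx.
Proof.
move=> h; rewrite unitmxE -det_tr det_trig.
  by rewrite big1 ?unitr1 // => i _; rewrite mxE; case: (h i i) => _ ->.
apply/is_trig_mxP => i j lij; rewrite mxE; by case: (h j i) => -> .
Qed.

Lemma comm_of (F : fieldType) n (x y : 'M[F]_n) : x \in unitmx -> y \in unitmx ->
  mxcomm x y = 1%:M -> x *m y = y *m x.
Proof.
move=> ux uy h; move: (congr1 (mulmx^~ (y *m x)) h).
by rewrite mul1mx /mxcomm !mulmxA mulmxKV // mulmxKV.
Qed.

Lemma comm_to (F : fieldType) n (x y : 'M[F]_n) : x \in unitmx -> y \in unitmx ->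
  x *m y = y *m x -> mxcomm x y = 1%:M.
Proof.
move=> ux uy h; rewrite /mxcomm h. rewrite mulmxK // mulmxV //.
Qed.

Lemma ring_comm (R : pzRingType) (X Z : R): X*X = 0 -> Z*Z = 0 -> Z*X = 0 ->
  (1+X)*(1+Z)*(1-X)*(1-Z) = 1 + X*Z.
Proof.
move=> hX hZ hZX.
have e1: (1+X)*(1+Z)*(1-X) = 1 + Z + X*Z.
  rewrite mulrBr mulr1 !mulrDl !mul1r !mulrDr !mulr1 !mulrDl !mul1r -mulrA !hZX hX mulr0 !addr0.
  by rewrite addrA addrAC addrK.
rewrite e1 mulrBr mulr1 !mulrDl mul1r -mulrA hZ mulr0 !addr0.
by rewrite addrAC addrK.
Qed.

Definition e0c (F : fieldType) n : 'cV[F]_n.+1 := delta_mx 0 0.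
Definition Am (F : fieldType) n (r : 'rV[F]_n.+1) : 'M[F]_n.+1 := 1%:M + e0c F n *m r.
Definition emax (F : fieldType) n : 'rV[F]_n.+1 := delta_mx 0 ord_max.

Lemma AE (F : fieldType) n (r : 'rV[F]_n.+1) i j :
  Am r i j = (i == j)%:R + (i == 0)%:R * r 0 j.
Proof. by rewrite /Am /e0c mxE dmxE mxE. Qed.

Lemma Am_inj (F : fieldType) n (r s : 'rV[F]_n.+1) : Am r = Am s -> r = s.
Proof.
move=> h; apply/matrixP => i j; rewrite (ord1 i).
by move/matrixP: h => /(_ 0 j); rewrite !AE eqxx !mul1r => /addrI.
Qed.

Lemma Am_unitri (F : fieldType) n (r : 'rV[F]_n.+1) : r 0 0 = 0 -> unitri (Am r).
Proof.
move=> h0 i j; split.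
  move=> lji; rewrite AE; have -> : (i == j) = false by apply/negbTE; rewrite neq_ltn lji orbT.
  have -> : (i == 0) = false by apply/negbTE; rewrite -lt0n; apply: leq_ltn_trans lji.
  by rewrite mul0r addr0.
move=> <-; rewrite AE eqxx; case: (i =P 0) => [->|_]; first by rewrite h0 mulr0 addr0.
by rewrite mul0r addr0.
Qed.

Lemma r_e0c (F : fieldType) n (r : 'rV[F]_n.+1) : r 0 0 = 0 -> r *m e0c F n = 0.
Proof.
move=> h; apply/matrixP => a b; rewrite /e0c mxdE (ord1 a) (ord1 b) h !mxE; by rewrite mul0r.
Qed.

Lemma AmM (F : fieldType) n (r s : 'rV[F]_n.+1) : r 0 0 = 0 -> Am r *m Am s = Am (r + s).
Proof.
move=> h; rewrite /Am mulmxDl mul1mx mulmxDr mulmx1 -mulmxA (mulmxA r) r_e0c //.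
by rewrite mul0mx mulmx0 addr0 mulmxDr -addrA (addrC (e0c F n *m s)).
Qed.

Lemma transvA (F : fieldType) n (j : 'I_n.+1) (c : F) : transv 0 j c = Am (c *: delta_mx 0 j).
Proof. by rewrite /transv /Am -scalemxAr /e0c mul_delta_mx. Qed.

Lemma Am_inv (F : fieldType) n (r : 'rV[F]_n.+1) : r 0 0 = 0 -> invmx (Am r) = Am (- r).
Proof.
move=> h; apply: inv_eq; rewrite AmM // subrr /Am mulmx0 addr0 //.
Qed.

Lemma commA (F : fieldType) n (r : 'rV[F]_n.+1) (Z : 'M[F]_n.+1) :
  r 0 0 = 0 -> Z *m Z = 0 -> Z *m e0c F n = 0 ->
  mxcomm (Am r) (1%:M + Z) = Am (r *m Z).
Proof.
move=> h0 hZ hZe.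
have iZ : invmx (1%:M + Z) = 1%:M - Z.
  by apply: inv_eq; rewrite mulmxBr mulmx1 mulmxDl mul1mx hZ addr0 addrK.
rewrite /mxcomm iZ Am_inv // /Am mulmxN.
have hX : (e0c F n *m r) *m (e0c F n *m r) = 0.
  by rewrite -mulmxA (mulmxA r) r_e0c // mul0mx mulmx0.
have hZX : Z *m (e0c F n *m r) = 0 by rewrite mulmxA hZe mul0mx.
move: hX hZ hZX; rewrite !mulmxE !idmxE => hX hZ hZX.
by rewrite ring_comm // mulmxA mulmxE.
Qed.



Lemma transv_unitri (F : fieldType) n (i j : 'I_n) (c : F) : (i < j)%N -> unitri (transv i j c).
Proof.
move=> lij p q; rewrite /transv !mxE; split.
  move=> lqp; have -> : (p == q) = false by apply/negbTE; rewrite neq_ltn lqp orbT.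
  case: (p =P i) => [epi|]; last by rewrite mulr0 addr0.
  case: (q =P j) => [eqj|]; last by rewrite mulr0 addr0.
  by move: lqp lij; rewrite epi eqj => /ltn_trans h /h; rewrite ltnn.
move=> <-; rewrite eqxx; case: (p =P i) => [epi|]; last by rewrite mulr0 addr0.
case: (p =P j) => [epj|]; last by rewrite mulr0 addr0.
by move: lij; rewrite -epi -epj ltnn.
Qed.

Lemma phi1 (F : fieldType) n (phi : 'M[F]_n.+2 -> 'M[F]_n.+2) :
  almost_identity phi -> phi 1%:M = 1%:M.
Proof.
move=> hA; have := hA ord0 ord_max 0 erefl; by rewrite /transv scale0r addr0.
Qed.

Lemma comm_pres (F : fieldType) n (phi : 'M[F]_n -> 'M[F]_n) x y :
  PCmap phi -> phi 1%:M = 1%:M -> unitri x -> unitri y -> x *m y = y *m x ->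
  phi x *m phi y = phi y *m phi x.
Proof.
case=> hU _ _ hC h1 hx hy e.
apply: comm_of; try apply: unitri_unit; try by apply: hU.
by rewrite -hC // comm_to // ?e // unitri_unit.
Qed.

Lemma comm_delta (F : fieldType) n (x : 'M[F]_n) a b :
  x *m transv a b 1 = transv a b 1 *m x ->
  forall p q, x p a * (q == b)%:R = (p == a)%:R * x b q.
Proof.
rewrite /transv mulmxDr mulmxDl mulmx1 mul1mx scale1r => /addrI /matrixP h p q.
by rewrite -mxdE -dmxE h.
Qed.

Lemma part1 (F : fieldType) n (phi : 'M[F]_n.+2 -> 'M[F]_n.+2) (r : 'rV[F]_n.+2) :
  PCmap phi -> almost_identity phi -> r 0 0 = 0 ->
  exists c, phi (Am r) = Am (r + c *: emax F n.+1).
Proof.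
move=> hPC hA h0.
have h1 := phi1 hA.
have hU : unitri (phi (Am r)) by case: hPC => hU _ _ _; apply: hU; apply: Am_unitri.
set x := phi (Am r) in hU *.
have x00 : x 0 0 = 1 by case: (hU 0 0) => _ ->.
have rows : forall i j, i != 0 -> x i j = (i == j)%:R.
  move=> i j hi.
  have li : (@ord0 n.+1 < i)%N by rewrite lt0n.
  have hc : Am r *m transv 0 i 1 = transv 0 i 1 *m Am r.
    have d0 : (1 *: delta_mx 0 i : 'rV[F]_n.+2) 0 0 = 0.
      by rewrite !mxE eq_sym (negbTE hi) andbF mulr0.
    by rewrite transvA !AmM // addrC.
  have := comm_pres hPC h1 (Am_unitri h0) (transv_unitri 1 li) hc.
  rewrite (hA _ _ _ li) -/x => /comm_delta /(_ 0 j).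
  by rewrite x00 eqxx mul1r /= mul1r eq_sym => ->.
set s : 'rV[F]_n.+2 := row 0 x - delta_mx 0 0.
have s00 : s 0 0 = 0 by rewrite !mxE x00 eqxx subrr.
have xA : x = Am s.
  apply/matrixP => i j; rewrite AE !mxE.
  case: (i =P 0) => [->|/eqP hi]; last by rewrite mul0r addr0 rows.
  by rewrite mul1r eqxx /= eq_sym addrCA subrr addr0.
have mx0 : (ord_max : 'I_n.+2) != 0 by [].
have key : forall j : 'I_n.+2, j != 0 -> j != ord_max -> s 0 j = r 0 j.
  move=> j hj hm.
  have ljm : (j < @ord_max n.+1)%N by rewrite ltn_neqAle hm -ltnS ltn_ord.
  have hZ : delta_mx j ord_max *m delta_mx j ord_max = 0 :> 'M[F]_n.+2.
    by rewrite mul_delta_mx_0 // eq_sym.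
  have hZe : delta_mx j ord_max *m e0c F n.+1 = 0 by rewrite mul_delta_mx_0.
  have rd : forall t : 'rV[F]_n.+2, t *m delta_mx j ord_max = t 0 j *: emax F n.+1.
    move=> t; apply/matrixP => a b; rewrite mxdE (ord1 a) !mxE eqxx /=.
    by case: (b == ord_max); rewrite ?mulr0 ?mulr1.
  have T : transv j ord_max (1 : F) = 1%:M + delta_mx j ord_max by rewrite /transv scale1r.
  case: hPC => hU' _ _ hC.
  have l0m : (@ord0 n.+1 < @ord_max n.+1)%N by [].
  have := hC _ _ (Am_unitri h0) (transv_unitri 1 ljm).
  rewrite (hA _ _ _ ljm) -/x xA T !commA // !rd /emax -!transvA.
  rewrite !(hA _ _ _ l0m) => /matrixP /(_ 0 ord_max).
  by rewrite /transv !mxE !eqxx /= !mulr1 => /addrI.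
exists (s 0 ord_max - r 0 ord_max); rewrite xA; congr Am.
apply/matrixP => a b; rewrite (ord1 a) !mxE.
case: (b =P 0) => [->|/eqP hb].
  by rewrite x00 h0 eqxx /= subrr mulr0 addr0.
case: (b =P ord_max) => [->|/eqP hm].
  by rewrite eqxx mulr1 /= subr0 addrCA subrr addr0.
by rewrite eqxx /= mulr0 addr0 subr0 -(key b hb hm) !mxE eqxx (negbTE hb) subr0.
Qed.



Definition fA (F : fieldType) n (phi : 'M[F]_n.+1 -> 'M[F]_n.+1) (r : 'rV[F]_n.+1) : F :=
  phi (Am r) 0 ord_max - r 0 ord_max.

Lemma Am_max (F : fieldType) n (r : 'rV[F]_n.+2) : Am r 0 ord_max = r 0 ord_max.
Proof. by rewrite AE eqxx /= add0r mul1r. Qed.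

Lemma part1' (F : fieldType) n (phi : 'M[F]_n.+2 -> 'M[F]_n.+2) (r : 'rV[F]_n.+2) :
  PCmap phi -> almost_identity phi -> r 0 0 = 0 ->
  phi (Am r) = Am (r + fA phi r *: emax F n.+1).
Proof.
move=> hP hA h0; have [c hc] := part1 hP hA h0.
suff -> : fA phi r = c by [].
by rewrite /fA hc Am_max !mxE eqxx /= eqxx mulr1 addrC addrK.
Qed.

Lemma fA_fix (F : fieldType) n (phi : 'M[F]_n.+2 -> 'M[F]_n.+2) (r : 'rV[F]_n.+2) :
  phi (Am r) = Am r -> fA phi r = 0.
Proof. by move=> h; rewrite /fA h Am_max subrr. Qed.

Lemma val0 k : nat_of_ord (0 : 'I_k.+4) = 0%N.
Proof. reflexivity. Qed.

Definition supp (F : fieldType) k (Z : 'M[F]_k.+4) :=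
  forall p q : 'I_k.+4, (3 <= p)%N || (q <= 2)%N -> Z p q = 0.

Lemma supp_mul (F : fieldType) k (Z W : 'M[F]_k.+4) : supp Z -> supp W -> Z *m W = 0.
Proof.
move=> hZ hW; apply/matrixP => p q; rewrite !mxE big1 // => m _.
case: (leqP m 2) => hm.
  by rewrite (hZ p m) ?mul0r // hm orbT.
by rewrite (hW m q) ?mulr0 // hm.
Qed.

Lemma supp_e0c (F : fieldType) k (Z : 'M[F]_k.+4) : supp Z -> Z *m e0c F k.+3 = 0.
Proof.
move=> hZ; apply/matrixP => p q; rewrite /e0c mxdE (hZ p 0); first by rewrite mul0r mxE.
by apply/orP; right; rewrite val0.
Qed.

Lemma supp_emax (F : fieldType) k (Z : 'M[F]_k.+4) : supp Z -> emax F k.+3 *m Z = 0.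
Proof.
move=> hZ; apply/matrixP => p q; rewrite /emax dmxE (hZ ord_max q); first by rewrite mulr0 mxE.
by apply/orP; left.
Qed.

Lemma supp_unitri (F : fieldType) k (Z : 'M[F]_k.+4) : supp Z -> unitri (1%:M + Z).
Proof.
move=> hZ.
have z : forall p q : 'I_k.+4, (q <= p)%N -> Z p q = 0.
  move=> p q hqp; apply: hZ; apply/orP; case: (leqP 3 p) => hp; [by left | right].
  by move: hp; rewrite ltnS => hp; apply: leq_trans hqp hp.
move=> p q; rewrite !mxE; split.
  move=> lqp; rewrite (z p q (ltnW lqp)) addr0.
  by have -> : (p == q) = false by apply/negbTE; rewrite neq_ltn lqp orbT.
by move=> ->; rewrite (z q q (leqnn _)) eqxx addr0.
Qed.

Lemma supp_comm (F : fieldType) k (Z : 'M[F]_k.+4) (i j : 'I_k.+4) :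
  supp Z -> (i <= 2)%N -> (3 <= j)%N ->
  (1%:M + Z) *m transv i j 1 = transv i j 1 *m (1%:M + Z).
Proof.
move=> hZ hi hj.
have e1 : Z *m delta_mx i j = 0.
  apply/matrixP => p q; rewrite mxdE (hZ p i); first by rewrite mul0r mxE.
  by rewrite hi orbT.
have e2 : delta_mx i j *m Z = 0.
  apply/matrixP => p q; rewrite dmxE (hZ j q); first by rewrite mulr0 mxE.
  by rewrite hj.
rewrite /transv scale1r !mulmxDr !mulmxDl !mulmx1 !mul1mx e1 e2 !addr0.
by rewrite addrAC.
Qed.

Lemma supp_of_comm (F : fieldType) k (x : 'M[F]_k.+4) :
  unitri x ->
  (forall i j : 'I_k.+4, (i <= 2)%N -> (3 <= j)%N -> x *m transv i j 1 = transv i j 1 *m x) ->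
  supp (x - 1%:M).
Proof.
move=> hx hc p q hpq; rewrite !mxE.
have x00 : x 0 0 = 1 by case: (hx 0 0) => _ ->.
case: (leqP 3 p) => hp.
  have := comm_delta (hc 0 p erefl hp) 0 q.
  by rewrite x00 mul1r eqxx mul1r eq_sym => <-; rewrite subrr.
move: hpq; rewrite leqNgt hp /= => hq.
pose i3 : 'I_k.+4 := inord 3.
have v3 : (3 <= i3)%N by rewrite inordK.
have := comm_delta (hc q i3 hq v3) p i3.
have x33 : x i3 i3 = 1 by case: (hx i3 i3) => _ ->.
by rewrite x33 eqxx mulr1 mulr1 => ->; rewrite subrr.
Qed.



Lemma fA_add (F : fieldType) k (phi : 'M[F]_k.+4 -> 'M[F]_k.+4) (P Q : 'rV[F]_k.+4) :
  PCmap phi -> almost_identity phi ->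
  (forall q : 'I_k.+4, (q <= 2)%N -> P 0 q = 0) ->
  (forall q : 'I_k.+4, (q <= 2)%N -> Q 0 q = 0) ->
  fA phi (P + Q) = fA phi P + fA phi Q.
Proof.
move=> hPC hA hP hQ.
pose i1 : 'I_k.+4 := inord 1; pose i2 : 'I_k.+4 := inord 2.
have v1 : nat_of_ord i1 = 1%N by rewrite inordK.
have v2 : nat_of_ord i2 = 2%N by rewrite inordK.
have i12 : (i1 == i2) = false by rewrite -val_eqE /= v1 v2.
have i21 : (i2 == i1) = false by rewrite eq_sym.
pose Z := delta_mx i1 0 *m P + delta_mx i2 0 *m Q.
have ZE : forall p q, Z p q = (p == i1)%:R * P 0 q + (p == i2)%:R * Q 0 q.
  by move=> p q; rewrite mxE !dmxE.
have sZ : supp Z.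
  move=> p q /orP [hp|hq]; rewrite ZE.
    have -> : (p == i1) = false.
      rewrite -val_eqE /= v1; apply/negbTE; rewrite neq_ltn; apply/orP; right.
      exact: leq_trans (isT : (2 <= 3)%N) hp.
    have -> : (p == i2) = false.
      by rewrite -val_eqE /= v2; apply/negbTE; rewrite neq_ltn hp orbT.
    by rewrite !mul0r addr0.
  by rewrite hP // hQ // !mulr0 addr0.
have hy := supp_unitri sZ.
case: (hPC) => hU hI hS hC.
have h1 := phi1 hA.
have hx : unitri (phi (1%:M + Z)) := hU _ hy.
set x := phi (1%:M + Z) in hx.
have hcx : forall i j : 'I_k.+4, (i <= 2)%N -> (3 <= j)%N ->
    x *m transv i j 1 = transv i j 1 *m x.
  move=> i j hi hj; have lij : (i < j)%N by apply: leq_ltn_trans hi hj.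
  rewrite -(hA _ _ 1 lij); apply: comm_pres => //; first exact: transv_unitri.
  exact: supp_comm.
have sZ' := supp_of_comm hx hcx.
have xE : x = 1%:M + (x - 1%:M) by rewrite addrC subrK.
have l01 : (0 < i1)%N by rewrite v1.
have l02 : (0 < i2)%N by rewrite v2.
have dE : forall (i : 'I_k.+4), (0 < i)%N -> (delta_mx 0 i : 'rV[F]_k.+4) 0 0 = 0.
  move=> i hi; rewrite mxE; case: (@eqP _ (0 : 'I_k.+4) i) => [e|_]; last by rewrite andbF.
  by move: hi; rewrite -e val0.
have dZ : forall (i : 'I_k.+4) (W : 'M[F]_k.+4), (delta_mx 0 i : 'rV[F]_k.+4) *m W = row i W.
  by move=> i W; rewrite rowE.
have step : forall (i : 'I_k.+4) (R : 'rV[F]_k.+4), (0 < i)%N -> R 0 0 = 0 ->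
    row i Z = R -> row i (x - 1%:M) = R + fA phi R *: emax F k.+3.
  move=> i R hi hR0 hrow.
  have d0 := dE i hi.
  have hi' : ((0%R : 'I_k.+4) < i)%N by rewrite val0.
  have e1 := commA d0 (supp_mul sZ sZ) (supp_e0c sZ).
  have e2 := commA d0 (supp_mul sZ' sZ') (supp_e0c sZ').
  rewrite !dZ hrow in e1 e2.
  have := hC _ _ (Am_unitri d0) hy.
  rewrite e1 part1' // -/x -(scale1r (delta_mx 0 i)) -transvA (hA _ _ _ hi') transvA scale1r.
  by rewrite {1}xE e2 => /Am_inj ->.
have rP : row i1 Z = P.
  apply/matrixP => a b; rewrite (ord1 a) mxE ZE eqxx i12 mul1r mul0r addr0.
  by [].
have rQ : row i2 Z = Q.
  by apply/matrixP => a b; rewrite (ord1 a) mxE ZE eqxx i21 mul1r mul0r add0r.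
have P00 : P 0 0 = 0 by apply: hP; rewrite val0.
have Q00 : Q 0 0 = 0 by apply: hQ; rewrite val0.
have r1 := step i1 P l01 P00 rP.
have r2 := step i2 Q l02 Q00 rQ.
pose v : 'rV[F]_k.+4 := delta_mx 0 i1 + delta_mx 0 i2.
have v00 : v 0 0 = 0 by rewrite mxE dE // dE // addr0.
have [c hc] := part1 hPC hA v00.
have em0 : (emax F k.+3) 0 0 = 0.
  by rewrite mxE; case: (@eqP _ (0 : 'I_k.+4) ord_max) => [e|_]; [move: (congr1 (@nat_of_ord _) e); rewrite val0 | rewrite andbF].
have w00 : (v + c *: emax F k.+3) 0 0 = 0 by rewrite [LHS]mxE v00 mxE em0 mulr0 addr0.
have PQ00 : (P + Q) 0 0 = 0 by rewrite mxE P00 Q00 addr0.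
have := hC _ _ (Am_unitri v00) hy.
rewrite commA // ?(supp_mul sZ sZ) ?(supp_e0c sZ) // mulmxDl !dZ rP rQ.
rewrite part1' // hc -/x {1}xE commA // ?(supp_mul sZ' sZ') ?(supp_e0c sZ') //.
rewrite mulmxDl -scalemxAl (supp_emax sZ') scaler0 addr0 mulmxDl !dZ r1 r2.
move=> /Am_inj /matrixP /(_ 0 ord_max); rewrite !mxE !eqxx /= !mulr1 => h.
apply: (addrI (P 0 ord_max + Q 0 ord_max)); rewrite h; ring.
Qed.



Lemma aA (F : fieldType) m (u : 'rV[F]_m) : a_mx u = Am (row_mx (0 : 'rV[F]_1) u).
Proof.
apply/matrixP => i j; rewrite AE.
have hl : forall j' : 'I_1, row_mx (0 : 'rV[F]_1) u 0 (lshift m j') = 0.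
  by move=> j'; rewrite row_mxEl mxE.
have hr : forall j' : 'I_m, row_mx (0 : 'rV[F]_1) u 0 (rshift 1 j') = u 0 j'.
  by move=> j'; rewrite row_mxEr.
have hl0 : (lshift m (0 : 'I_1) == 0) = true.
  apply/eqP; exact: val_inj.
have hr0 : forall j' : 'I_m, (rshift 1 j' == 0) = false.
  move=> j'; apply/negbTE; by rewrite -val_eqE.
have hlr : forall (a : 'I_1) (b : 'I_m), (lshift m a == rshift 1 b :> 'I_m.+1) = false.
  by move=> a b; rewrite (ord1 a) -val_eqE.
have hrl : forall (a : 'I_1) (b : 'I_m), (rshift 1 b == lshift m a :> 'I_m.+1) = false.
  by move=> a b; rewrite (ord1 a) -val_eqE.
have hrr : forall (a b : 'I_m), (rshift 1 a == rshift 1 b :> 'I_m.+1) = (a == b).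
  by move=> a b; rewrite -val_eqE /= eqSS val_eqE.
case: (@split_ordP 1 m i) => i' ->; case: (@split_ordP 1 m j) => j' ->.
- by rewrite block_mxEul (ord1 i') (ord1 j') hl !eqxx mulr0 addr0 mxE.
- by rewrite block_mxEur hr hlr add0r (ord1 i') hl0 mul1r.
- by rewrite block_mxEdl hl hrl mulr0 addr0 mxE.
- by rewrite block_mxEdr hr hrr hr0 mul0r addr0 mxE.
Qed.

Lemma val0' n : nat_of_ord (0 : 'I_n.+1) = 0%N.
Proof. reflexivity. Qed.

Lemma AT (F : fieldType) n (r : 'rV[F]_n.+2) (c : F) : r 0 0 = 0 ->
  Am r *m transv ord0 ord_max c = Am (r + c *: emax F n.+1).
Proof.
move=> h; have -> : transv ord0 ord_max c = transv 0 ord_max c by [].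
by rewrite transvA AmM.
Qed.

Lemma zero_f (F : fieldType) k (phi : 'M[F]_k.+4 -> 'M[F]_k.+4) (r : 'rV[F]_k.+4) :
  PCmap phi -> almost_identity phi ->
  (forall q : 'I_k.+4, (q <= 2)%N -> r 0 q = 0) -> fA phi r = 0.
Proof.
move=> hPC hA hr.
pose Pr (s : 'rV[F]_k.+4) := (forall q : 'I_k.+4, (q <= 2)%N -> s 0 q = 0) /\ fA phi s = 0.
have P0 : Pr 0.
  split; first by move=> q _; rewrite mxE.
  apply: fA_fix; have -> : Am (0 : 'rV[F]_k.+4) = 1%:M by rewrite /Am mulmx0 addr0.
  exact: phi1.
suff : Pr (\sum_(j < k.+4) r 0 j *: delta_mx 0 j) by rewrite -row_sum_delta => -[].
apply: big_ind => //.
  move=> a b [ha fa] [hb fb]; split.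
    by move=> q hq; rewrite mxE ha ?hb ?addr0.
  by rewrite fA_add // fa fb addr0.
move=> j _; case: (leqP j 2) => hj.
  by rewrite hr // scale0r.
split.
  move=> q hq; rewrite !mxE.
  have -> : (q == j) = false by apply/negbTE; rewrite neq_ltn (leq_ltn_trans hq hj).
  by rewrite andbF mulr0.
apply: fA_fix; rewrite -transvA; apply: hA.
by rewrite val0; apply: leq_ltn_trans hj.
Qed.

Theorem mainTheorem10 (F : fieldType) (k : nat) (phi : 'M[F]_(k.+4) -> 'M[F]_(k.+4)) :
  PCmap phi -> almost_identity phi ->
  exists f : 'rV[F]_(k.+3) -> F,
    (forall u : 'rV[F]_(k.+3),
        phi (a_mx u) = a_mx u *m transv ord0 ord_max (f u)) /\
    (forall u : 'rV[F]_(k.+3),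
        u 0 0 = 0 -> u 0 (inord 1) = 0 -> f u = 0).
Proof.
move=> hPC hA.
have R00 : forall u : 'rV[F]_(k.+3), (row_mx (0 : 'rV[F]_1) u : 'rV[F]_(k.+4)) 0 0 = 0.
  move=> u; rewrite mxE; case: splitP => [j _|j hj]; first by rewrite mxE.
  by move: hj; rewrite val0.
exists (fun u => fA phi (row_mx (0 : 'rV[F]_1) u)); split.
  move=> u; rewrite aA part1' // AT //.
move=> u h0 h1; apply: zero_f => // q hq.
rewrite mxE; case: splitP => [j _|j hj]; first by rewrite mxE.
have hj1 : (nat_of_ord j <= 1)%N by move: hq; rewrite hj.
case: (posnP j) => [e|p].
  have -> : j = 0 by apply: val_inj; rewrite /= e; exact: (esym (val0' _)).
  exact: h0.
have -> : j = inord 1.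
  apply: val_inj; rewrite /= inordK //; apply/eqP; by rewrite eqn_leq hj1 p.
exact: h1.
Qed.
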